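(* Let $X$ be a Hausdorff space. The following are equivalent: (a) $X$ is a weak $P$-space; (b) $\mathcal{K}(X)$ is a weak $P$-space; (c) $\mathcal{F}(X)$ is a weak $P$-space; (d) $\mathcal{F}_n(X)$ is a weak $P$-space for some positive integer $n$.
   Context: For a $T_1$ space $X$, $\mathcal{K}(X)$ is the set of nonempty compact subsets of $X$ with the Vietoris topology (generated by $U^+=\{A: A\subset U\}$ and $U^-=\{A: A\cap U\neq\emptyset\}$ for $U$ open in $X$); $\mathcal{F}(X)$ and $\mathcal{F}_n(X)$ are its subspaces of nonempty finite subsets and of nonempty subsets with at most $n$ points. A point $p$ of a space $Z$ is a weak $P$-point if $p\notin\overline{N}$ for every countable $N\subset Z-\{p\}$; $Z$ is a weak $P$-space if all its points are weak $P$-points. *)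

(* Defs.v *)
From HB Require Import structures.
From mathcomp Require Import all_boot all_order all_algebra.
From mathcomp Require Import all_classical all_reals all_analysis.
Set Implicit Arguments. Unset Strict Implicit. Unset Printing Implicit Defensive.
Local Open Scope classical_set_scope.

Definition weak_P_point (T : topologicalType) (p : T) : Prop :=
  forall N : set T, countable N -> N `<=` [set~ p] -> ~ closure N p.

Definition weak_P_space (T : topologicalType) : Prop :=
  forall p : T, weak_P_point p.

(* Closure of N in the topology on T generated by the subbase S:
   p is in the closure iff every basic open set (finite intersection of
   subbasic sets; the empty intersection being T) containing p meets N. *)
Definition subbase_closure (T : Type) (S : set (set T)) (N : set T) : set T :=
  [set p | forall (k : nat) (F : 'I_k -> set T),
     (forall i, S (F i)) -> (forall i, F i p) ->
     exists2 q, N q & forall i, F i q].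

(* Y (as a subspace of the topology generated by S) is a weak P-space.
   For p in Y and N a subset of Y, the closure of N in the subspace Y
   is (closure of N in T) `&` Y, and p is in Y. *)
Definition weak_P_subspace (T : Type) (S : set (set T)) (Y : set T) : Prop :=
  forall p, Y p -> forall N : set T, countable N -> N `<=` Y `\ p ->
    ~ subbase_closure S N p.

(* Vietoris subbase on subsets of X: U^+ and U^- for U open. *)
Definition vietoris_subbase (X : topologicalType) : set (set (set X)) :=
  [set W | exists U : set X, open U /\
     (W = [set A | A `<=` U] \/ W = [set A | A `&` U !=set0])].

Definition hypK (X : topologicalType) : set (set X) :=
  [set A | compact A /\ A !=set0].
Definition hypF (X : topologicalType) : set (set X) :=
  [set A | finite_set A /\ A !=set0].
Definition hypFn (X : topologicalType) (n : nat) : set (set X) :=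
  [set A | A !=set0 /\ exists f : 'I_n -> X, A `<=` range f].
Arguments vietoris_subbase X : clear implicits.
Arguments hypK X : clear implicits.
Arguments hypF X : clear implicits.
Arguments hypFn X n : clear implicits.

(* Main.v *)
Require Import Defs.
From HB Require Import structures.
From mathcomp Require Import all_boot all_order all_algebra.
From mathcomp Require Import all_classical all_reals all_analysis.
Local Open Scope classical_set_scope.
Definition pX {X : topologicalType} (x : X) : Type := X.
HB.instance Definition _ (X : topologicalType) (x : X) := Choice.on (pX x).
HB.instance Definition _ (X : topologicalType) (x : X) := isPointed.Build (pX x) x.
Lemma inj_nat (X : topologicalType) (K : set X) : infinite_set K ->
  exists u : nat -> X, injective u /\ (forall n, K (u n)).
Proof.
move=> Ki; have [x0 _] := infinite_setN0 Ki.
move/infiniteP: Ki => /(@pcard_leP _ (pX x0) _ K)/injfunPex [f fS finj].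
exists f; split.
  by move=> m n; apply: finj; rewrite inE.
by move=> n; apply: fS.
Qed.
Lemma compact_finite (X : topologicalType) (K : set X) :
  weak_P_space X -> compact K -> finite_set K.
Proof.
move=> wP cK; apply: contrapT => Ki.
have [u [uinj uK]] := @inj_nat _ _ Ki.
have [x [Kx clx]] : K `&` cluster (u @ \oo) !=set0.
  apply: cK.
  have H : \forall n \near \oo, K (u n) by apply: filterE.
  exact: H.
have key : forall n0, (forall n, u n = x -> (n <= n0)%N) ->
    closure (range u `\ x) x.
  move=> n0 Hn0 B Bx.
  have := clx (u @` [set n | (n0 < n)%N]) B _ Bx.
  case.
    have H : \forall n \near \oo, (u @` [set n | (n0 < n)%N]) (u n).
      by apply: filterS (nbhs_infty_gt n0) => n lt; exists n.
    exact: H.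
  move=> y [[n /= lt_n <-] By]; exists (u n); split => //; split.
    by exists n.
  by move=> /= unx; have := Hn0 _ unx; rewrite leqNgt lt_n.
apply: (wP x (range u `\ x)).
- apply: (@sub_countable _ _ _ (range u)).
    by apply: subset_card_le => y [].
  exact: (sub_countable (card_image_le u setT) (card_lexx _)).
- by move=> y [_ /= yx].
case: (pselect (exists n1, u n1 = x)) => [[n1 un1]|nex].
  by apply: (key n1) => n unx; rewrite (uinj n n1) ?unx ?un1.
by apply: (key 0%N) => n unx; exfalso; apply: nex; exists n.
Qed.
Lemma mono_wPs (T : Type) (S : set (set T)) (Y Y' : set T) :
  Y' `<=` Y -> weak_P_subspace S Y -> weak_P_subspace S Y'.
Proof.
move=> sub H p Y'p N cN NY; apply: H => //; first exact: sub.
by move=> A /NY [/sub YA nA].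
Qed.

Lemma Fn_to_X (X : topologicalType) n : (0 < n)%N ->
  weak_P_subspace (vietoris_subbase X) (hypFn X n) -> weak_P_space X.
Proof.
move=> n0 H p N cN Np clN.
have Yq : forall q, hypFn X n [set q].
  move=> q; split; first by exists q.
  by exists (fun _ => q) => y ->; exists (Ordinal n0).
apply: (H [set p] (Yq p) ((fun q => [set q]) @` N)).
- exact: sub_countable (card_image_le _ _) cN.
- move=> A [q Nq <-]; split; first exact: Yq.
  move=> /= eq; have : [set q] q by [].
  rewrite eq => /= qp; exact: (Np q Nq qp).
- move=> k F SF Fp.
  have : \forall x \near p, forall i, F i [set x].
    apply: filter_forall => i.
    have [U [oU [E|E]]] := SF i; move: (Fp i); rewrite E /= => Up.
    + have pU : U p by apply: Up.
      apply: filterS (open_nbhs_nbhs (conj oU pU)) => y Uy z ->; exact: Uy.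
    + have pU : U p by case: Up => z [-> ?].
      by apply: filterS (open_nbhs_nbhs (conj oU pU)) => y Uy; exists y.
  move=> /clN [q [Nq Fq]]; exists [set q]; [by exists q | exact: Fq].
Qed.
Lemma X_to_F (X : topologicalType) :
  weak_P_space X -> weak_P_subspace (vietoris_subbase X) (hypF X).
Proof.
move=> wP K [fK [k0 Kk0]] N cN NY.
have NF : forall A, N A -> finite_set A by move=> A /NY [[]].
have NK : forall A, N A -> A <> K by move=> A /NY [_ /= ?].
pose D1 := \bigcup_(A in N) (A `\` K).
have cD1 : countable D1.
  apply: bigcup_countable => // A NA.
  exact/finite_set_countable/finite_setD/NF.
pose U := ~` closure D1.
have oU : open U by apply: closed_openC; exact: closed_closure.
have KU : K `<=` U.
  move=> y Ky; apply: (wP y D1 cD1).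
  by move=> z [A _ [_ nKz]] /= zy; apply: nKz; rewrite zy.
pose D2 := fun y => \bigcup_(A in [set A | N A /\ ~ A y]) A.
have cD2 : forall y, countable (D2 y).
  move=> y; apply: bigcup_countable.
    by apply: (sub_countable _ cN); apply: subset_card_le => A [].
  by move=> A [NA _]; exact/finite_set_countable/NF.
pose V := fun y => ~` closure (D2 y).
have oV : forall y, open (V y).
  by move=> y; apply: closed_openC; exact: closed_closure.
have Vy : forall y, V y y.
  move=> y; apply: (wP y (D2 y) (cD2 y)).
  by move=> z [A [_ nAy] Az] /= zy; apply: nAy; rewrite -zy.
have [B eB] := (finite_fsetP).1 fK.
pose s : seq X := finmap.enum_fset B.
pose F (j : 'I_(size s).+1) : set (set X) :=
  match unlift ord0 j with
  | None => [set A | A `<=` U]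
  | Some i => [set A | A `&` V (nth k0 s i) !=set0] end.
move=> /(_ (size s).+1 F) H.
case: H.
- move=> j; rewrite /F; case: (unlift ord0 j) => [i|].
    by exists (V (nth k0 s i)); split; [exact: oV | right].
  by exists U; split; [exact: oU | left].
- move=> j; rewrite /F; case: (unlift ord0 j) => [i|] /=; last exact: KU.
  exists (nth k0 s i); split; last exact: Vy.
  by rewrite eB /=; apply: mem_nth; exact: ltn_ord.
move=> A NA FA.
have AU : A `<=` U by have := FA ord0; rewrite /F unlift_none.
have AK : A `<=` K.
  move=> z Az; apply: contrapT => nKz; apply: (AU z Az).
  by apply: subset_closure; exists A.
have [y [Ky nAy]] : exists y, K y /\ ~ A y.
  apply: contrapT => H'; apply: (NK A NA); apply/seteqP; split => // y Ky.
  by apply: contrapT => nAy; apply: H'; exists y.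
have ys : y \in s by move: Ky; rewrite eB.
have ilt : (index y s < size s)%N by rewrite index_mem.
have := FA (lift ord0 (Ordinal ilt)); rewrite /F liftK /= nth_index //.
case=> z [Az Vz]; apply: Vz; apply: subset_closure; exists A => //.
Qed.
Lemma Fn_sub_F (X : topologicalType) n : hypFn X n `<=` hypF X.
Proof.
move=> A [An0 [f sub]]; split => //.
exact: sub_finite_set sub (finite_image f finite_finset).
Qed.

Lemma F_sub_K (X : topologicalType) : hypF X `<=` hypK X.
Proof. by move=> A [fA An0]; split => //; exact: finite_compact. Qed.

Lemma K_sub_F (X : topologicalType) : weak_P_space X -> hypK X `<=` hypF X.
Proof. by move=> wP A [cA An0]; split => //; exact: compact_finite. Qed.

Arguments mono_wPs {T S Y Y'}.
Arguments Fn_to_X {X n}.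
Arguments X_to_F {X}.
Arguments K_sub_F {X}.
Arguments Fn_sub_F {X n}.
Arguments F_sub_K {X}.

Theorem theorem4p4 (X : topologicalType) (hX : hausdorff_space X) :
  [/\ weak_P_space X <-> weak_P_subspace (vietoris_subbase X) (hypK X),
      weak_P_space X <-> weak_P_subspace (vietoris_subbase X) (hypF X) &
      weak_P_space X <->
        exists n : nat, (0 < n)%N /\
          weak_P_subspace (vietoris_subbase X) (hypFn X n)].
Proof.
split; split.
- by move=> wP; apply: (mono_wPs (K_sub_F wP)); exact: X_to_F.
- move=> H; apply: (@Fn_to_X X 1%N) => //.
  by apply: (mono_wPs _ H) => A /Fn_sub_F /F_sub_K.
- exact: X_to_F.
- move=> H; apply: (@Fn_to_X X 1%N) => //.
  exact: (mono_wPs (@Fn_sub_F X 1%N) H).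
- move=> wP; exists 1%N; split => //.
  exact: (mono_wPs (@Fn_sub_F X 1%N) (X_to_F wP)).
- by move=> [n [n0 H]]; exact: (Fn_to_X n0 H).
Qed.
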